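(* Let $\mathcal{G}=(\mathcal{V},\mathcal{E})$ be a directed graph and $f:2^{\mathcal{E}}\to\mathbb{R}_+$ a normalized, nonnegative, monotone nondecreasing submodular function, and define the node function $h:2^{\mathcal{V}}\to\mathbb{R}_+$ by $h(X)=f(\delta^+(X))$. Then: (1) $h$ is not always submodular, i.e., there exist such $\mathcal{G}$ and $f$ for which $h$ is not submodular; (2) $h$ is always subadditive: $h(A)+h(B)\ge h(A\cup B)$ for all $A,B\subseteq\mathcal{V}$.
   Context: For $X\subseteq\mathcal{V}$, $\delta^+(X)=\{(v,u)\in\mathcal{E}: v\in X,\ u\notin X\}$ is the set of edges leaving $X$. A set function $f$ is normalized if $f(\emptyset)=0$, monotone nondecreasing if $A\subseteq B$ implies $f(A)\le f(B)$, and submodular if $f(A)+f(B)\ge f(A\cup B)+f(A\cap B)$ for all $A,B$. *)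

(* Defs.v *)
From mathcomp Require Import all_boot all_order all_algebra.
Set Implicit Arguments. Unset Strict Implicit. Unset Printing Implicit Defensive.
Import Order.TTheory GRing.Theory Num.Theory.
Local Open Scope ring_scope.

(* A directed graph: finite vertex type V with edge set E : {set V * V};
   an edge (v,u) goes from v to u. Edge set functions are maps on subsets of E,
   given as functions on {set V*V}; their properties are required on subsets of E only. *)

Definition delta_plus (V : finType) (E : {set V * V}) (X : {set V}) : {set V * V} :=
  [set e in E | (e.1 \in X) && (e.2 \notin X)].

Section SetFun.
Variables (R : realFieldType) (T : finType) (D : {set T}) (f : {set T} -> R).
Definition normalized := f set0 = 0.
Definition nonneg_on := forall A : {set T}, A \subset D -> 0 <= f A.
Definition monotone_on := forall A B : {set T}, A \subset D -> B \subset D -> A \subset B -> f A <= f B.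
Definition submodular_on := forall A B : {set T}, A \subset D -> B \subset D ->
  f (A :|: B) + f (A :&: B) <= f A + f B.
Definition subadditive_on := forall A B : {set T}, A \subset D -> B \subset D ->
  f (A :|: B) <= f A + f B.
End SetFun.

Definition node_fun (R : realFieldType) (V : finType) (E : {set V * V})
  (f : {set V * V} -> R) : {set V} -> R := fun X => f (delta_plus E X).

Definition admissible (R : realFieldType) (V : finType) (E : {set V * V})
  (f : {set V * V} -> R) :=
  [/\ normalized f, nonneg_on E f, monotone_on E f & submodular_on E f].

(* Main.v *)
Require Import Defs.
From mathcomp Require Import all_boot all_order all_algebra.
Import Order.TTheory GRing.Theory Num.Theory.
Local Open Scope ring_scope.

Lemma delta_union (V : finType) (E : {set V * V}) (A B : {set V}) :
  delta_plus E (A :|: B) \subset delta_plus E A :|: delta_plus E B.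
Proof.
apply/subsetP => -[x y]; rewrite !inE /= negb_or.
case/and3P => -> /orP [] -> /andP [-> ->] //=; by rewrite orbT.
Qed.

Lemma delta_sub (V : finType) (E : {set V * V}) (A : {set V}) :
  delta_plus E A \subset E.
Proof. by apply/subsetP => e; rewrite inE => /andP []. Qed.

Definition ind (R : realFieldType) (S : {set 'I_4 * 'I_4}) : R :=
  if S == set0 then 0 else 1.

Definition o (k : nat) (h : (k < 4)%N) : 'I_4 := Ordinal h.

Definition E4 : {set 'I_4 * 'I_4} :=
  [set (o 1 isT, o 0 isT); (o 2 isT, o 3 isT)].

Theorem proposition1 (R : realFieldType) :
  (exists (V : finType) (E : {set V * V}) (f : {set V * V} -> R),
      admissible E f /\ ~ submodular_on [set: V] (node_fun E f)) /\
  (forall (V : finType) (E : {set V * V}) (f : {set V * V} -> R),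
      admissible E f -> subadditive_on [set: V] (node_fun E f)).
Proof.
split.
  exists ('I_4 : finType), E4, (@ind R); split.
    split.
    - by rewrite /normalized /ind eqxx.
    - by move=> A _; rewrite /ind; case: ifP.
    - move=> A B _ _ sAB; rewrite /ind.
      have [_|nA] := eqVneq A set0; first by case: ifP.
      have [eB|//] := eqVneq B set0; move: sAB; rewrite eB subset0 => /eqP eA.
      by rewrite eA eqxx in nA.
    - move=> A B _ _; rewrite /ind.
      have [eA|_] := eqVneq A set0; first by rewrite eA set0U set0I eqxx add0r addr0.
      have [eB|_] := eqVneq B set0; first by rewrite eB setU0 setI0 eqxx !addr0; case: ifP.
      by apply: lerD; case: ifP => _; rewrite ?ler01 ?lexx.
  move=> /(_ [set o 0 isT; o 1 isT] [set o 1 isT; o 2 isT] (subsetT _) (subsetT _)).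
  rewrite /node_fun /ind.
  have -> : delta_plus E4 [set o 0 isT; o 1 isT] == set0.
    apply/eqP/setP => -[x y]; rewrite !inE /=.
    by case: x => [[|[|[|[|x]]]] hx]; case: y => [[|[|[|[|y]]]] hy].
  have -> : (delta_plus E4 [set o 1 isT; o 2 isT] == set0) = false.
    apply/negbTE/set0Pn; exists (o 2 isT, o 3 isT); by rewrite !inE.
  have -> : (delta_plus E4 ([set o 0 isT; o 1 isT] :|: [set o 1 isT; o 2 isT]) == set0) = false.
    apply/negbTE/set0Pn; exists (o 2 isT, o 3 isT); by rewrite !inE.
  have -> : (delta_plus E4 ([set o 0 isT; o 1 isT] :&: [set o 1 isT; o 2 isT]) == set0) = false.
    apply/negbTE/set0Pn; exists (o 1 isT, o 0 isT); by rewrite !inE.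
  by rewrite lerD2r ler10.
move=> V E f [f0 fnn fmon fsub] A B _ _; rewrite /node_fun.
have sA := @delta_sub V E A; have sB := @delta_sub V E B.
have sU : delta_plus E A :|: delta_plus E B \subset E by rewrite subUset sA.
have h1 := fmon _ _ (@delta_sub V E (A :|: B)) sU (@delta_union V E A B).
apply: (le_trans h1); apply: le_trans (fsub _ _ sA sB).
rewrite lerDl; apply: fnn.
by rewrite (subset_trans (subsetIl _ _) sA).
Qed.
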